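(* Let $m\ge1$ and consider a preferential (dynamic) attachment circuit of index $m$. For $0\le j\le n$ let $D^{(m)}_{n,j}$ be the degree (indegree plus outdegree, edges counted with multiplicity) of node $j$ at time $n$. Then for $n\ge j$ and every integer $d$, $$\mathbb{P}\bigl(D^{(m)}_{n,j}=d\bigr)=\bigl(d-m(1-\delta_{j,0})\bigr)!\sum_{\substack{b_1+\cdots+b_{n-j}=m(n-j+1-\delta_{j,0})-d\\ 0\le b_1\le\min\{m,(m+1)j\}}}\left(\prod_{r=1}^{n-j}\binom{m}{b_r}\right)\frac{\prod_{r=1}^{n-j}\bigl\langle (m+1)j+\sum_{\ell=1}^{r-1}b_\ell+r-1\bigr\rangle_{b_r}}{\prod_{r=0}^{n-j-1}\langle (m+1)(j+r)+1\rangle_m},$$ where the sum is over tuples $(b_1,\dots,b_{n-j})$ of nonnegative integers.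
   Context: Preferential (dynamic) attachment circuit of index $m\ge1$: at time $0$ there is a single node labeled $0$. At each time $n\ge1$ a new node labeled $n$ is added and $m$ parents are chosen for it one at a time, with replacement, among nodes $0,\dots,n-1$. Before the $(i+1)$-th choice ($i=0,\dots,m-1$), each existing node $v$ is chosen with probability $\frac{d_i(v)+1}{\sum_{x}(d_i(x)+1)}$, where $d_i(x)$ is the outdegree of $x$ in the current multigraph including the edges created by the first $i$ choices for node $n$; after each choice an edge from the chosen parent to node $n$ is immediately added (multi-edges allowed). $\langle x\rangle_s=x(x+1)\cdots(x+s-1)$ is the rising factorial, $\langle x\rangle_0=1$; $\delta_{j,0}$ is the Kronecker delta. *)

(* Defs.v *)
From mathcomp Require Import all_boot all_order all_algebra.
Set Implicit Arguments. Unset Strict Implicit. Unset Printing Implicit Defensive.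
Import Order.TTheory GRing.Theory Num.Theory.
Local Open Scope ring_scope.

(* A full history up to time n is the flat sequence s of the n*m parent
   choices in chronological order: the k-th choice (k = 0,1,...) is the
   ((k mod m)+1)-th choice of node  k %/ m + 1.  The edge created by choice k
   goes from parent s_k to node k %/ m + 1. *)

Definition choice_time (m k : nat) : nat := (k %/ m).+1.

(* conditional probability of the k-th choice given the previous ones:
   node x is chosen w.p. (d(x)+1) / sum_{y < t} (d(y)+1), where d is the
   outdegree in the current multigraph (all previous choices). *)
Definition step_prob (m : nat) (s : seq nat) (k : nat) : rat :=
  let t := choice_time m k in
  let pre := take k s in
  let x := nth 0%N s k in
  if (x < t)%N then
    ((count_mem x pre).+1)%:R / (\sum_(y < t) (count_mem (y : nat) pre).+1)%:R
  else 0.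

Definition path_prob (m n : nat) (s : seq nat) : rat :=
  \prod_(k < n * m) step_prob m s k.

Definition degree (m n : nat) (s : seq nat) (j : nat) : nat :=
  \sum_(k < n * m) ((nth 0%N s k == j) + (choice_time m k == j))%N.

(* P(D^{(m)}_{n,j} = d): sum over all histories (labels in 'I_n.+1; invalid
   histories have probability 0) *)
Definition prob_degree (m n j : nat) (d : int) : rat :=
  \sum_(s : (n * m).-tuple 'I_n.+1)
     if ((degree m n (map val s) j)%:Z == d) then path_prob m n (map val s) else 0.

Definition rising (x s : nat) : nat := \prod_(i < s) (x + i)%N.

(* factorial of an integer argument; convention 0 for negative arguments
   (only occurs where the accompanying sum vanishes) *)
Definition intfact (z : int) : nat :=
  match z with Posz k => k`! | Negz _ => 0%N end.

(* Main.v *)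
Require Import Defs.
From mathcomp Require Import all_boot all_order all_algebra.
From mathcomp Require Import ring lra zify.
Import Order.TTheory GRing.Theory Num.Theory.
Local Open Scope ring_scope.
Set Implicit Arguments. Unset Strict Implicit. Unset Printing Implicit Defensive.


Lemma sum_tuple_cons (T : finType) r (F : (r.+1).-tuple T -> rat) :
  \sum_(b : (r.+1).-tuple T) F b =
  \sum_(x : T) \sum_(t : r.-tuple T) F [tuple of x :: t].
Proof.
rewrite pair_big /=.
rewrite (reindex (fun p : T * r.-tuple T => [tuple of p.1 :: p.2])) //=.
exists (fun b : (r.+1).-tuple T => (thead b, [tuple of behead b])).
  by move=> [x t] _ /=; congr pair; apply: val_inj.
by move=> b _; rewrite [RHS]tuple_eta.
Qed.

Lemma sum_tuple_rcons (T : finType) r (F : (r.+1).-tuple T -> rat) :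
  \sum_(b : (r.+1).-tuple T) F b =
  \sum_(t : r.-tuple T) \sum_(x : T) F [tuple of rcons t x].
Proof.
have rinj : injective (fun b : (r.+1).-tuple T => [tuple of rev b]).
  by move=> a b /(congr1 val) /= /(can_inj revK) ab; apply: val_inj.
rewrite (reindex_inj rinj) sum_tuple_cons exchange_big /=.
have rinj' : injective (fun b : r.-tuple T => [tuple of rev b]).
  by move=> a b /(congr1 val) /= /(can_inj revK) ab; apply: val_inj.
rewrite [RHS](reindex_inj rinj') /=.
apply: eq_bigr => t _; apply: eq_bigr => x _; congr F; apply: val_inj => /=.
by rewrite rev_cons.
Qed.

Lemma sum_tuple0 (T : finType) (F : 0.-tuple T -> rat) :
  \sum_(b : 0.-tuple T) F b = F [tuple].
Proof.
rewrite (bigD1 [tuple]) //= big1 ?addr0 // => b; rewrite [b]tuple0 => /eqP[]; exact: val_inj.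
Qed.

Definition pp (m : nat) (t : seq nat) : rat := \prod_(k < size t) step_prob m t k.

Lemma step_rcons m t x k : (k < size t)%N ->
  step_prob m (rcons t x) k = step_prob m t k.
Proof.
move=> kt; rewrite /step_prob nth_rcons kt -cats1 takel_cat //; exact: ltnW.
Qed.

Definition Wt m (t : seq nat) : nat :=
  \sum_(y < choice_time m (size t)) (count_mem (y : nat) t).+1.

Lemma step_last m t x : step_prob m (rcons t x) (size t) =
  if (x < choice_time m (size t))%N then (count_mem x t).+1%:R / (Wt m t)%:R else 0.
Proof.
by rewrite /step_prob /Wt nth_rcons ltnn eqxx -cats1 take_size_cat.
Qed.

Lemma pp_rcons m t x : pp m (rcons t x) = pp m t * step_prob m (rcons t x) (size t).
Proof.
rewrite /pp size_rcons big_ord_recr /=; congr (_ * _).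
by apply: eq_bigr => k _; rewrite step_rcons.
Qed.

Lemma pp_valid m t : pp m t != 0 ->
  forall k, (k < size t)%N -> (nth 0%N t k < choice_time m k)%N.
Proof.
move=> /prodf_neq0 H k kt; have := H (Ordinal kt) isT.
rewrite /step_prob /=.
by case: ifP => //; rewrite eqxx.
Qed.

Lemma sum_count_lt T s : (\sum_(y < T) count_mem (y : nat) s = count (fun z => z < T) s)%N.
Proof.
elim: s => [|x s IH] /=; first by rewrite big1.
rewrite big_split /= IH; congr (_ + _)%N.
elim: T {IH} => [|T IHT]; first by rewrite big_ord0.
rewrite big_ord_recr /= IHT; case: (ltngtP x T) => h.
- by rewrite (ltn_trans h (ltnSn T)).
- by rewrite ltnS leqNgt h.
- by rewrite h ltnSn.
Qed.

Lemma Wt_val m t : (0 < m)%N -> pp m t != 0 -> Wt m t = (size t + choice_time m (size t))%N.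
Proof.
move=> m0 H; rewrite /Wt.
under eq_bigr do rewrite -addn1.
rewrite big_split /= sum_count_lt sum_nat_const card_ord muln1; congr (_ + _)%N.
apply/eqP; rewrite -all_count; apply/(all_nthP 0%N) => k kt.
apply: (leq_trans (pp_valid H kt)); rewrite /choice_time ltnS leq_div2r //.
exact: ltnW.
Qed.

Lemma Wt_pos m t : (0 < m)%N -> pp m t != 0 -> (Wt m t)%:R != 0 :> rat.
Proof. by move=> m0 H; rewrite Wt_val // pnatr_eq0 addnS. Qed.

Lemma sum_step m n t : (0 < m)%N -> (choice_time m (size t) <= n.+1)%N -> pp m t != 0 ->
  \sum_(x : 'I_n.+1) step_prob m (rcons t x) (size t) = 1.
Proof.
move=> m0 Tn H; under eq_bigr do rewrite step_last.
rewrite -big_mkcond /= (big_ord_narrow Tn) /=.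
by rewrite -mulr_suml -natr_sum -/(Wt m t) divff // Wt_pos.
Qed.

Lemma count_rcons_mem (j : nat) t x : count_mem j (rcons t x) = (count_mem j t + (x == j))%N.
Proof. by rewrite -cats1 count_cat /= addn0. Qed.

Lemma inner_sum m n j c t : (0 < m)%N -> (j <= n)%N -> (choice_time m (size t) <= n.+1)%N ->
  \sum_(x : 'I_n.+1) (if count_mem j (rcons t (x : nat)) == c then pp m (rcons t x) else 0)
  = pp m t * ((count_mem j t == c)%:R * (1 - step_prob m (rcons t j) (size t))
              + ((count_mem j t).+1 == c)%:R * step_prob m (rcons t j) (size t)).
Proof.
move=> m0 jn Tn.
have [H0|H] := eqVneq (pp m t) 0.
  by rewrite H0 mul0r big1 // => x _; rewrite pp_rcons H0 mul0r if_same.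
under eq_bigr do rewrite count_rcons_mem pp_rcons.
have ji : j = (inord j : 'I_n.+1) :> nat by rewrite inordK.
rewrite (bigD1 (inord j)) //= -ji eqxx addn1.
have HS := sum_step m0 Tn H; rewrite (bigD1 (inord j)) //= -ji in HS.
have -> : \sum_(x < n.+1 | x != inord j)
    (if (count_mem j t + (x == j :> nat))%N == c then pp m t * step_prob m (rcons t x) (size t) else 0)
  = (count_mem j t == c)%:R * pp m t * (1 - step_prob m (rcons t j) (size t)).
  have -> : 1 - step_prob m (rcons t j) (size t) =
     \sum_(i < n.+1 | i != inord j) step_prob m (rcons t i) (size t) by rewrite -HS addrC addrK.
  rewrite mulr_sumr; apply: eq_bigr => x xj.
  have -> : (x == j :> nat) = false.
    by apply/negbTE; apply: contra xj => /eqP xj; apply/eqP/val_inj; rewrite /= xj inordK.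
  by rewrite addn0; case: eqP => _; rewrite ?mul1r ?mul0r.
by case: ((count_mem j t).+1 == c); case: (count_mem j t == c); rewrite /=; ring.
Qed.

Definition G m n j K c : rat :=
  \sum_(t : K.-tuple 'I_n.+1)
     (if count_mem j (map val t) == c then pp m (map val t) else 0).

Definition pj m j K c : rat :=
  if (j < choice_time m K)%N then c.+1%:R / (K + choice_time m K)%:R else 0.

Lemma pp_sj m j t : (0 < m)%N ->
  pp m t * step_prob m (rcons t j) (size t) = pp m t * pj m j (size t) (count_mem j t).
Proof.
move=> m0; have [->|H] := eqVneq (pp m t) 0; first by rewrite !mul0r.
by rewrite step_last Wt_val.
Qed.

Lemma G_rec m n j K c : (0 < m)%N -> (j <= n)%N -> (K < n * m)%N ->
  G m n j K.+1 c = G m n j K c * (1 - pj m j K c)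
     + (if c is c'.+1 then G m n j K c' * pj m j K c' else 0).
Proof.
move=> m0 jn Kn.
have Tn : (choice_time m K <= n.+1)%N.
  rewrite /choice_time ltnS; apply: ltnW; by rewrite ltn_divLR.
rewrite /G sum_tuple_rcons.
have E : forall t : K.-tuple 'I_n.+1,
  \sum_(x : 'I_n.+1) (if count_mem j (map val [tuple of rcons t x]) == c
        then pp m (map val [tuple of rcons t x]) else 0)
  = (if count_mem j (map val t) == c then pp m (map val t) else 0) * (1 - pj m j K c)
     + (if c is c'.+1 then (if count_mem j (map val t) == c' then pp m (map val t) else 0)
          * pj m j K c' else 0).
  move=> t /=.
  under eq_bigr do rewrite map_rcons.
  have sz : size (map val t) = K by rewrite size_map size_tuple.
  rewrite inner_sum ?sz //.
  move: (map val t) sz => u szu.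
  have E2 := pp_sj j u m0; rewrite szu in E2.
  set p := pp m _ in E2 *; set s := step_prob _ _ _ in E2 *; set cn := count_mem j _ in E2 *.
  clearbody p s cn.
  have -> : p * ((cn == c)%:R * (1 - s) + (cn.+1 == c)%:R * s)
    = (cn == c)%:R * p - (cn == c)%:R * (p * s) + (cn.+1 == c)%:R * (p * s) by ring.
  rewrite E2.
  case: (eqVneq cn c) => [<-|ne] /=.
    rewrite (gtn_eqF (ltnSn cn)) mul0r addr0.
    case: cn {E2} => [|k] /=; first by ring.
    by rewrite (gtn_eqF (ltnSn k)) mul0r; ring.
  rewrite !mul0r subr0 add0r add0r.
  case: c ne => [|c'] ne //=; first by rewrite mul0r.
  by rewrite eqSS; case: eqP => [->|]; rewrite ?mul1r ?mul0r //; ring.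
rewrite (eq_bigr _ (fun t _ => E t)) big_split /=; congr (_ + _).
  symmetry; apply: mulr_suml.
by case: c {E} => [|c']; [rewrite big1 | symmetry; apply: mulr_suml].
Qed.

Section Pure.
Variables m j : nat.

Definition Wr r := ((m + 1) * (j + r) + 1)%N.
Definition Yr r b := ((m + 1) * j + b + r)%N.

Fixpoint Sb r b : rat := match r with
  | 0 => (b == 0%N)%:R
  | r'.+1 => \sum_(b0 < b.+1) Sb r' b0 *
        ('C(m, b - b0) * rising (Yr r' b0) (b - b0))%:R / (rising (Wr r') m)%:R
  end.

Definition U r i b : rat := \sum_(b0 < b.+1) Sb r b0 *
        ('C(i, b - b0) * rising (Yr r b0) (b - b0))%:R / (rising (Wr r) i)%:R.

Lemma SU r b : Sb r.+1 b = U r m b. Proof. by []. Qed.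

Lemma U_vanish r i b : (r * m + i < b)%N -> (forall b0, (r * m < b0)%N -> Sb r b0 = 0) -> U r i b = 0.
Proof.
move=> hb hS; rewrite /U big1 // => b0 _.
have [h|h] := ltnP (r * m) b0; first by rewrite hS ?mul0r.
by rewrite bin_small ?mul0n ?mulr0 ?mul0r //; lia.
Qed.

Lemma S_vanish r b : (r * m < b)%N -> Sb r b = 0.
Proof.
elim: r b => [|r IH] b hb /=; first by case: b hb.
apply: (U_vanish (r := r) (i := m)) => //; lia.
Qed.

Lemma U0 r b : U r 0 b = Sb r b.
Proof.
rewrite /U big_ord_recr /= subnn big1 ?add0r.
  by rewrite bin0 /rising !big_ord0 mul1n divr1 mulr1.
move=> b0 _; rewrite bin_small ?mul0n ?mulr0 ?mul0r //.
have := ltn_ord b0; lia.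
Qed.

Lemma rising_0 x : rising x 0 = 1%N.
Proof. by rewrite /rising big_ord0. Qed.

Lemma risingS x s : rising x s.+1 = (rising x s * (x + s))%N.
Proof. by rewrite /rising big_ord_recr. Qed.

Lemma rising0 s : (0 < s)%N -> rising 0 s = 0%N.
Proof. by case: s => // s _; rewrite /rising big_ord_recl /= mul0n. Qed.

Lemma rising_pos x s : (0 < x)%N -> (0 < rising x s)%N.
Proof.
move=> x0; rewrite /rising; elim/big_ind: _ => //; first by move=> a b; rewrite muln_gt0 => ->.
move=> i _; lia.
Qed.

Lemma U_step r i b : U r i.+1 b * (Wr r + i)%:R =
   U r i b + (if b is b'.+1 then (Yr r b')%:R * U r i b' else 0).
Proof.
have Wp : (rising (Wr r) i)%:R != 0 :> rat.
  by rewrite pnatr_eq0 -lt0n rising_pos // /Wr addn1.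
have Wp' : (Wr r + i)%:R != 0 :> rat by rewrite pnatr_eq0 /Wr; lia.
rewrite /U risingS natrM.
move: Wp Wp'; move: (rising (Wr r) i)%:R (Wr r + i)%:R => x w Wp Wp'.
case: b => [|b].
  rewrite !big_ord1 !subnn !bin0 !rising_0 !mul1n addr0.
  by field; rewrite Wp Wp'.
rewrite big_ord_recr [X in _ = X + _]big_ord_recr /= subnn !bin0.
rewrite /= !rising_0 !mul1n.
rewrite mulrDl [RHS]addrAC; congr (_ + _); last by field; rewrite Wp Wp'.
rewrite big_distrl /= mulr_sumr -big_split /=; apply: eq_bigr => b0 _.
have hb0 := ltn_ord b0.
have -> : (b.+1 - b0 = (b - b0).+1)%N by lia.
rewrite binS risingS.
have -> : (Yr r b0 + (b - b0))%N = Yr r b by rewrite /Yr; lia.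
move: (Yr r b) => y; rewrite !natrM natrD.
by field; rewrite Wp Wp'.
Qed.

End Pure.

Section Chain.
Variables m j R : nat.
Hypothesis m0 : (0 < m)%N.
Variable g : nat -> nat -> rat.
Hypothesis g0 : forall c, g 0 c = (c == 0%N)%:R.
Hypothesis grec : forall K c, (K < (j + R) * m)%N ->
  g K.+1 c = g K c * (1 - pj m j K c) + (if c is c'.+1 then g K c' * pj m j K c' else 0).

Lemma pj_early K c : (K < j * m)%N -> pj m j K c = 0.
Proof.
move=> h; rewrite /pj /choice_time ifF //; apply/negbTE; rewrite -leqNgt.
by rewrite ltn_divLR.
Qed.

Lemma pj_block r i c : (i < m)%N ->
  pj m j (j * m + r * m + i) c = c.+1%:R / (Wr m j r + i)%:R.
Proof.
move=> im; rewrite /pj; have -> : choice_time m (j * m + r * m + i) = (j + r).+1.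
  rewrite /choice_time -mulnDl divnMDl // divn_small // addn0; lia.
rewrite ifT; last lia.
by congr (_ / _%:R); rewrite /Wr; lia.
Qed.

Lemma g_early K c : (K <= j * m)%N -> g K c = (c == 0%N)%:R.
Proof.
elim: K c => [|K IH] c h; first exact: g0.
rewrite grec; last by apply: (leq_trans h); rewrite leq_mul2r leq_addr orbT.
rewrite pj_early // subr0 mulr1 IH; last exact: ltnW.
by case: c => // c; rewrite pj_early // mulr0 addr0.
Qed.

Lemma g_inner r : (r < R)%N ->
  (forall c, g (j * m + r * m) c =
     if (c <= r * m)%N then (factorial c)%:R * Sb m j r (r * m - c)%N else 0) ->
  forall i, (i <= m)%N -> forall c, g (j * m + r * m + i) c =
     if (c <= r * m + i)%N then (factorial c)%:R * U m j r i (r * m + i - c)%N else 0.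
Proof.
move=> rR hr; elim=> [|i IH] hi c.
  by rewrite !addn0 hr; case: ifP => // _; rewrite U0.
have im : (i < m)%N by [].
have KR : (j * m + r * m + i < (j + R) * m)%N.
  rewrite mulnDl -addnA ltn_add2l.
  apply: (@leq_trans (r.+1 * m)); first by rewrite mulSn; lia.
  by rewrite leq_mul2r rR orbT.
rewrite addnS grec // !pj_block //.
have IH' := IH (ltnW hi).
have US := U_step m j r i.
have w0 : (Wr m j r + i)%:R != 0 :> rat by rewrite pnatr_eq0 /Wr; lia.
have Uv : forall b, (r * m + i < b)%N -> U m j r i b = 0.
  by move=> b hb; apply: U_vanish => // b0 hb0; apply: S_vanish.
set q := (r * m + i)%N in IH' Uv *.
have -> : (r * m + i.+1)%N = q.+1 by rewrite /q addnS.
have Wq : forall c, (c <= q)%N -> (Wr m j r + i)%N = (Yr m j r (q - c) + c + 1)%N.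
  move=> c0 hc0; rewrite /Wr /Yr /q; nia.
have hS : forall k, k.+1%:R = k%:R + 1 :> rat by move=> k; rewrite -addn1 natrD.
have hY : forall c, (c <= q)%N -> (Yr m j r (q - c))%:R = (Wr m j r + i)%:R - c.+1%:R :> rat.
  by move=> c0 hc0; rewrite (Wq c0 hc0) -addnA addn1 natrD addrK.
case: (ltngtP c q.+1) => hc.
- rewrite ltnS in hc; case: c hc => [|c] hc.
  + rewrite IH' leq0n subn0 fact0 mul1r addr0 /=.
    have E := US q.+1; rewrite (Uv q.+1) ?ltnSn // add0r in E.
    have := hY 0%N hc; rewrite subn0 => hy; rewrite hy in E.
    move: E w0; move: (Wr m j r + i)%:R => w.
    move: (U m j r i.+1 q.+1) (U m j r i q) => a b E w0.
    have -> : a = (w - 1%:R) * b / w by rewrite -E mulfK.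
    by field.
    rewrite IH' hc IH' (ltnW hc) pj_block // subSS.
    have -> : (q - c = (q - c.+1).+1)%N by lia.
    have E := US (q - c.+1).+1.
    rewrite /= hY // in E.
    move: E w0; rewrite factS natrM; move: (Wr m j r + i)%:R => w.
    move: (U m j r i.+1 (q - c.+1).+1) (U m j r i (q - c.+1).+1) (U m j r i (q - c.+1))
       ((factorial c)%:R) => a b1 b0 f E w0.
    rewrite !hS in E *.
    have -> : a = (b1 + (w - (c%:R + 1 + 1)) * b0) / w by rewrite -E mulfK.
    by field.
- case: c hc => // c hc; rewrite IH' IH' !ifF; try by apply/negbTE; rewrite -ltnNge; lia.
  by rewrite !mul0r addr0.
- subst c; rewrite IH' ltnn mul0r add0r IH' leqnn subnn pj_block // subnn.
  have E := US 0%N; rewrite addr0 in E.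
  move: E w0; rewrite factS natrM.
  move: (U m j r i.+1 0) (U m j r i 0) ((Wr m j r + i)%:R) ((factorial q)%:R) => a b w f E w0.
  have -> : a = b / w by rewrite -E mulfK.
  by field.
Qed.

Lemma g_block r : (r <= R)%N -> forall c, g (j * m + r * m) c =
     if (c <= r * m)%N then (factorial c)%:R * Sb m j r (r * m - c)%N else 0.
Proof.
elim: r => [|r IH] hr c.
  rewrite mul0n addn0 g_early //; case: c => [|c] //=.
have rR : (r < R)%N by [].
rewrite mulSnr addnA (g_inner rR (IH (ltnW hr)) (leqnn m)).
by rewrite SU.
Qed.

End Chain.

Section Tup.
Variables m j : nat.

Definition Fr R (s : seq nat) : rat :=
  ((\prod_(i < R) 'C(m, nth 0%N s i))%:R *
   ((\prod_(i < R) rising ((m + 1) * j + \sum_(l < i) nth 0%N s l + i) (nth 0%N s i))%:R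
     / (\prod_(r < R) rising ((m + 1) * (j + r) + 1) m)%:R)).

Lemma sumn_nth s : sumn s = (\sum_(l < size s) nth 0%N s l)%N.
Proof. by rewrite sumnE (big_nth 0%N) big_mkord. Qed.

Lemma Fr_rcons R s x : size s = R ->
  Fr R.+1 (rcons s x) = Fr R s *
    ('C(m, x) * rising (Yr m j R (sumn s)) x)%:R / (rising (Wr m j R) m)%:R.
Proof.
move=> sz; rewrite /Fr !big_ord_recr /=.
have nr : forall k, (k < R)%N -> nth 0%N (rcons s x) k = nth 0%N s k.
  by move=> k hk; rewrite nth_rcons sz hk.
have nR : nth 0%N (rcons s x) R = x by rewrite nth_rcons sz ltnn eqxx.
rewrite nR.
have -> : (\prod_(i < R) 'C(m, nth 0%N (rcons s x) (widen_ord (leqnSn R) i)) =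
           \prod_(i < R) 'C(m, nth 0%N s i))%N.
  by apply: eq_bigr => i _; rewrite /= nr.
have -> : (\prod_(i < R) rising ((m + 1) * j + \sum_(l < widen_ord (leqnSn R) i)
              nth 0%N (rcons s x) l + widen_ord (leqnSn R) i)
           (nth 0%N (rcons s x) (widen_ord (leqnSn R) i)) =
         \prod_(i < R) rising ((m + 1) * j + \sum_(l < i) nth 0%N s l + i) (nth 0%N s i))%N.
  apply: eq_bigr => i _ /=; rewrite nr //; congr (rising (_ + _ + _) _).
  apply: eq_bigr => l _; rewrite nr //; exact: (ltn_trans (ltn_ord l)).
have -> : (\sum_(l < R) nth 0%N (rcons s x) l = sumn s)%N.
  by rewrite sumn_nth sz; apply: eq_bigr => l _; rewrite nr.
have Wp : forall r, (0 < rising ((m + 1) * (j + r) + 1) m)%N by move=> r; apply: rising_pos; lia.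
have P1 : (\prod_(r < R) rising ((m + 1) * (j + r) + 1) m)%:R != 0 :> rat.
  by rewrite pnatr_eq0 -lt0n; apply: prodn_cond_gt0 => r _; apply: Wp.
have P2 : (rising (Wr m j R) m)%:R != 0 :> rat by rewrite pnatr_eq0 -lt0n /Wr; apply: Wp.
rewrite /Yr /Wr in P2 *.
move: P1 P2; rewrite !natrM.
move: (\prod_(r < R) rising ((m + 1) * (j + r) + 1) m)%:R (rising ((m + 1) * (j + R) + 1) m)%:R => e w P1 P2.
by field; rewrite P1 P2.
Qed.

Lemma tuple_S R N b : (b <= N)%N ->
  \sum_(t : R.-tuple 'I_N.+1 | sumn (map val t) == b) Fr R (map val t) = Sb m j R b.
Proof.
elim: R b => [|R IH] b hb.
  rewrite big_mkcond sum_tuple0 /= /Fr !big_ord0.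
  by case: b {hb} => [|b] /=; rewrite ?mul1r ?divr1.
rewrite big_mkcond sum_tuple_rcons exchange_big /=.
under eq_bigr => x _.
  under eq_bigr => t _.
    rewrite map_rcons sumn_rcons Fr_rcons ?size_map ?size_tuple //.
    over.
  over.
simpl.
have E : forall x : 'I_N.+1,
  \sum_(t : R.-tuple 'I_N.+1)
     (if (sumn (map val t) + x == b)%N then
        Fr R (map val t) * ('C(m, x) * rising (Yr m j R (sumn (map val t))) x)%:R
          / (rising (Wr m j R) m)%:R else 0)
  = if (x <= b)%N then Sb m j R (b - x)%N * ('C(m, x) * rising (Yr m j R (b - x)%N) x)%:R
          / (rising (Wr m j R) m)%:R else 0.
  move=> x; case: ifP => hx.
    rewrite -(IH (b - x)%N); last by apply: leq_trans hb; exact: leq_subr.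
    rewrite -mulrA mulr_suml [RHS]big_mkcond; apply: eq_bigr => t _.
    have -> : ((sumn (map val t) + x == b) = (sumn (map val t) == b - x))%N.
      by apply/eqP/eqP; lia.
    by case: eqP => [->|]; rewrite ?mul0r ?mulrA.
  rewrite big1 // => t _; rewrite ifF //; apply/negbTE/eqP; lia.
rewrite (eq_bigr _ (fun x _ => E x)) -big_mkcond /=.
rewrite (eq_bigl (fun i : 'I_N.+1 => (i < b.+1)%N)) // (big_ord_narrow (hb : (b.+1 <= N.+1)%N)) /=.
rewrite /= (reindex_inj rev_ord_inj) /=; apply: eq_bigr => x _.
have hx := ltn_ord x.
rewrite subSS subKn //.
Qed.

Lemma tnth_val R N (b : R.-tuple 'I_N) i : (tnth b i : nat) = nth 0%N (map val b) i.
Proof. by rewrite -(tnth_map val) (tnth_nth 0%N). Qed.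

Lemma term_Fr R N (b : R.-tuple 'I_N) :
  ((\prod_(i < R) 'C(m, tnth b i))%:R *
       ((\prod_(i < R)
           rising ((m + 1) * j + \sum_(l < R | (l < i)%N) (tnth b l : nat) + i)
                  (tnth b i))%:R
        / (\prod_(r < R) rising ((m + 1) * (j + r) + 1) m)%:R)) = Fr R (map val b).
Proof.
rewrite /Fr; congr (_%:R * (_%:R / _)).
  by apply: eq_bigr => i _; rewrite tnth_val.
apply: eq_bigr => i _; rewrite tnth_val; congr (rising (_ + _ + _) _).
rewrite (big_ord_narrow (ltnW (ltn_ord i))); apply: eq_bigr => l _; by rewrite tnth_val.
Qed.

Lemma Fr_constr R s : (0 < R)%N -> ~~ (nth 0%N s 0 <= minn m ((m + 1) * j))%N -> Fr R s = 0.
Proof.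
case: R => // R _; rewrite -ltnNge => hx.
rewrite /Fr.
have [hm|hm] := ltnP m (nth 0%N s 0).
  rewrite big_ord_recl /= bin_small // mul0n mul0r //.
have j0 : j = 0%N.
  case: j hx hm => // j'; rewrite /minn; case: ifP => h; lia.
have Z : (\prod_(i < R.+1) rising ((m + 1) * j + \sum_(l < i) nth 0%N s l + i) (nth 0%N s i))%N = 0%N.
  rewrite big_ord_recl /= big_ord0 j0 muln0 rising0 ?mul0n //.
  by move: hx; rewrite j0 muln0; case: (minn _ _) (geq_minr m 0) => // k; rewrite leqn0.
by rewrite Z mul0r mulr0.
Qed.

Lemma stat_sum R (T' : int) (be : nat) : T' = be%:Z ->
  \sum_(b : R.-tuple 'I_(absz T').+1 |
            ((\sum_(i < R) (tnth b i : nat))%:Z == T') &&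
            [forall i : 'I_R,
               (val i == 0%N) ==> ((tnth b i : nat) <= minn m ((m + 1) * j))%N])
      ((\prod_(i < R) 'C(m, tnth b i))%:R *
       ((\prod_(i < R)
           rising ((m + 1) * j + \sum_(l < R | (l < i)%N) (tnth b l : nat) + i)
                  (tnth b i))%:R
        / (\prod_(r < R) rising ((m + 1) * (j + r) + 1) m)%:R)) = Sb m j R be.
Proof.
move=> ->; rewrite /= -(tuple_S R (leqnn be)).
under eq_bigr do rewrite term_Fr.
rewrite big_mkcond [RHS]big_mkcond; apply: eq_bigr => b _.
have hs : (\sum_(i < R) (tnth b i : nat))%N = sumn (map val b).
  rewrite sumn_nth size_map size_tuple; apply: eq_bigr => i _; exact: tnth_val.
rewrite hs eqz_nat; case: (sumn _ == be) => //=.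
case: forallP => // hf; rewrite Fr_constr //.
- case: R b hf {hs} => // b hf; case: hf => -[] //.
- apply/negP => hx; apply: hf => i; apply/implyP => /eqP i0.
  by rewrite tnth_val i0.
Qed.

Lemma stat_sum_neg R (T' : int) (k : nat) : T' = Negz k ->
  \sum_(b : R.-tuple 'I_(absz T').+1 |
            ((\sum_(i < R) (tnth b i : nat))%:Z == T') &&
            [forall i : 'I_R,
               (val i == 0%N) ==> ((tnth b i : nat) <= minn m ((m + 1) * j))%N])
      ((\prod_(i < R) 'C(m, tnth b i))%:R *
       ((\prod_(i < R)
           rising ((m + 1) * j + \sum_(l < R | (l < i)%N) (tnth b l : nat) + i)
                  (tnth b i))%:R
        / (\prod_(r < R) rising ((m + 1) * (j + r) + 1) m)%:R)) = 0 :> rat.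
Proof. by move=> ->; rewrite big_pred0. Qed.

End Tup.

Lemma G0 m n j c : G m n j 0 c = (c == 0%N)%:R.
Proof. by rewrite /G sum_tuple0 /= /pp big_ord0 eq_sym; case: eqP. Qed.

Lemma count_nth_sum (s : seq nat) N j : size s = N ->
  (\sum_(k < N) (nth 0%N s k == j))%N = count_mem j s.
Proof. by move=> <-; rewrite -sumn_count sumnE big_map (big_nth 0%N) big_mkord. Qed.

Lemma choice_sum m n j : (0 < m)%N ->
  (\sum_(k < n * m) (choice_time m k == j))%N = (m * ((0 < j) && (j <= n)))%N.
Proof.
move=> m0; elim: n => [|n IH].
  by rewrite mul0n big_ord0; case: j => [|j] /=; rewrite muln0.
rewrite mulSnr big_split_ord IH /=.
have -> : (\sum_(k < m) (choice_time m (n * m + k) == j))%N = (m * (n.+1 == j))%N.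
  rewrite (eq_bigr (fun _ => (n.+1 == j) : nat)).
    by rewrite sum_nat_const card_ord.
  by move=> k _; rewrite /choice_time /= divnMDl // divn_small // addn0.
case: (ltngtP j n.+1) => h.
- by rewrite ltnS in h; rewrite h muln0 addn0 andbT.
- by rewrite (leqNgt j n) (ltnW h) andbF !muln0.
- by subst j; rewrite ltnn andbF muln0 add0n andbT muln1.
Qed.

Lemma path_pp m n (s : (n * m).-tuple 'I_n.+1) :
  path_prob m n (map val s) = pp m (map val s).
Proof. by rewrite /pp size_map size_tuple. Qed.

Lemma degree_eq m n j s : (0 < m)%N -> (j <= n)%N -> size s = (n * m)%N ->
  degree m n s j = (count_mem j s + m * (1 - (j == 0%N)))%N.
Proof.
move=> m0 jn sz; rewrite /degree big_split /= count_nth_sum // choice_sum //.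
by case: j jn => [|j] jn //=; rewrite jn.
Qed.

Lemma prob_G m n j c : (0 < m)%N -> (j <= n)%N ->
  prob_degree m n j ((c + m * (1 - (j == 0%N)))%N%:Z) = G m n j (n * m) c.
Proof.
move=> m0 jn; rewrite /prob_degree /G; apply: eq_bigr => s _.
by rewrite degree_eq ?size_map ?size_tuple // path_pp eqz_nat eqn_add2r.
Qed.

Lemma prob_neg m n j d k : (0 < m)%N -> (j <= n)%N ->
  d - (m * (1 - (j == 0%N)))%N%:Z = Negz k -> prob_degree m n j d = 0.
Proof.
move=> m0 jn E; rewrite /prob_degree big1 // => s _; rewrite ifF //.
apply/negbTE/eqP => h; move: E; rewrite -h degree_eq ?size_map ?size_tuple // NegzE.
lia.
Qed.

Theorem theorem3 (m n j : nat) (d : int) :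
  (1 <= m)%N -> (j <= n)%N ->
  let T : int := (m * (n - j + 1 - (j == 0%N)))%:Z - d in
  prob_degree m n j d =
    (intfact (d - (m * (1 - (j == 0%N)))%:Z))%:R *
    \sum_(b : (n - j).-tuple 'I_(absz T).+1 |
            ((\sum_(i < n - j) (tnth b i : nat))%:Z == T) &&
            [forall i : 'I_(n - j),
               (val i == 0%N) ==> ((tnth b i : nat) <= minn m ((m + 1) * j))%N])
      ((\prod_(i < n - j) 'C(m, tnth b i))%:R *
       ((\prod_(i < n - j)
           rising ((m + 1) * j + \sum_(l < n - j | (l < i)%N) (tnth b l : nat) + i)
                  (tnth b i))%:R
        / (\prod_(r < n - j) rising ((m + 1) * (j + r) + 1) m)%:R)).
Proof.
move=> m0 jn T.
case E: (d - (m * (1 - (j == 0%N)))%:Z) => [c|k]; last first.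
  by rewrite (prob_neg m0 jn E) /= mul0r.
have hd : d = (c + m * (1 - (j == 0%N)))%N%:Z.
  by move: E; rewrite PoszD => <-; rewrite subrK.
rewrite /= hd prob_G //.
set R := (n - j)%N.
have nR : n = (j + R)%N by rewrite /R subnKC.
have grec : forall K c0, (K < (j + R) * m)%N ->
  G m n j K.+1 c0 = G m n j K c0 * (1 - pj m j K c0)
     + (if c0 is c'.+1 then G m n j K c' * pj m j K c' else 0).
  by move=> K c0 hK; apply: G_rec => //; rewrite nR.
have GB := g_block m0 (G0 m n j) grec (leqnn R) c.
have hn : (n * m = j * m + R * m)%N by rewrite {1}nR mulnDl.
rewrite hn GB.
have h1 : (n - j + 1 - (j == 0%N) = R + (1 - (j == 0%N)))%N.
  by rewrite /R; case: (j == 0%N); lia.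
have hT : T = (m * (R + (1 - (j == 0%N))))%N%:Z - (c + m * (1 - (j == 0%N)))%N%:Z.
  by rewrite /T hd h1.
clearbody R; move: (1 - (j == 0%N))%N hT => e0 hT.
case: ifP => hc.
  by rewrite (@stat_sum m j R T (R * m - c)%N) // hT; lia.
rewrite (@stat_sum_neg m j R T (c - R * m).-1) ?mulr0 //.
rewrite hT NegzE; lia.
Qed.
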